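(* Let $n\ge1$ and $m\in\mathbb{N}$. Let $\mathcal{Q}_m=\bigoplus_{t=0}^m H_t\subseteq H^2(\mathbb{T}^n)$ and let $p\in H_m$ be a homogeneous polynomial of degree $m$ with $\|p\|_2=1$. Then the operator $S_p=P_{\mathcal{Q}_m}T_p|_{\mathcal{Q}_m}$ admits a lift, i.e. there exists $\varphi\in\mathcal{S}(\mathbb{D}^n)$ with $S_p=P_{\mathcal{Q}_m}T_\varphi|_{\mathcal{Q}_m}$, if and only if $p$ is a unimodular constant multiple of a monomial.
   Context: $H_t\subseteq\mathbb{C}[z_1,\dots,z_n]$ is the space of homogeneous polynomials of degree $t$, viewed as a subspace of the Hardy space $H^2(\mathbb{T}^n)$ (closed subspace of $L^2(\mathbb{T}^n,\mu)$, $\mu$ normalized Lebesgue measure, of functions with Fourier coefficients supported in $\mathbb{Z}_+^n$); thus $\mathcal{Q}_m$ is the space of polynomials of degree at most $m$, which is invariant under all $T_{z_i}^*$. $\|\cdot\|_2$ is the $H^2$ norm, $T_\varphi f=\varphi f$, $P_{\mathcal{Q}_m}$ the orthogonal projection onto $\mathcal{Q}_m$, and $\mathcal{S}(\mathbb{D}^n)$ the closed unit ball of $H^\infty(\mathbb{D}^n)$ (sup norm). *)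

(* Defs.v *)
From HB Require Import structures.
From mathcomp Require Import all_boot all_order all_algebra.
From mathcomp Require Import all_classical all_reals all_analysis.
From mathcomp Require Import complex.
Set Implicit Arguments. Unset Strict Implicit. Unset Printing Implicit Defensive.
Import Order.TTheory GRing.Theory Num.Theory.
Import numFieldNormedType.Exports.
Local Open Scope classical_set_scope.
Local Open Scope ring_scope.

Definition mindex (n : nat) := {ffun 'I_n -> nat}.
Definition mdeg n (a : mindex n) : nat := (\sum_(i < n) a i)%N.

Definition mi_le n (N : nat) : seq (mindex n) :=
  [seq a <- [seq [ffun i => nat_of_ord (f i)] | f : {ffun 'I_n -> 'I_N.+1} <- enum {ffun 'I_n -> 'I_N.+1}]
     | (mdeg a <= N)%N].

Definition Cplx (R : realType) : numClosedFieldType := R[i].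

Section Defs.
Variables (R : realType) (n : nat).
Local Notation C := (Cplx R).

(* A (formal) power series / function in H^2(T^n) is given by its coefficients
   (its Fourier coefficients, supported in Z_+^n). *)
Definition coeffs := mindex n -> C.

Definition zpow (z : 'I_n -> C) (a : mindex n) : C := \prod_(i < n) z i ^+ a i.

Definition homog (m : nat) (p : coeffs) : Prop := forall a, mdeg a <> m -> p a = 0.

Definition inQ (m : nat) (q : coeffs) : Prop := forall a, (m < mdeg a)%N -> q a = 0.

Definition h2norm_homog (m : nat) (p : coeffs) : C :=
  sqrtC (\sum_(a <- mi_le n m | mdeg a == m) `|p a| ^+ 2).

Definition mulc (phi q : coeffs) : coeffs := fun a =>
  \sum_(b <- mi_le n (mdeg a) | [forall i, b i <= a i]%N)
     phi b * q [ffun i => (a i - b i)%N].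

(* Coefficients of P_{Q_m} (phi * q) *)
Definition PQmul (m : nat) (phi q : coeffs) : coeffs := fun a =>
  if (mdeg a <= m)%N then mulc phi q a else 0.

Definition psum (phi : coeffs) (z : 'I_n -> C) (N : nat) : C :=
  \sum_(a <- mi_le n N) phi a * zpow z a.

(* phi in S(D^n): power series converging absolutely on the open polydisc D^n
   (i.e. a holomorphic function on D^n) with sup norm <= 1. *)
Definition in_schur_ball (phi : coeffs) : Prop :=
  forall z : 'I_n -> C, (forall i, `|z i| < 1) ->
    (exists M : C, forall N, \sum_(a <- mi_le n N) `|phi a * zpow z a| <= M) /\
    (exists l : C, psum phi z @ \oo --> l /\ `|l| <= 1).

Definition unimod_monomial (p : coeffs) : Prop :=
  exists (c : C) (a0 : mindex n), `|c| = 1 /\ forall a, p a = if a == a0 then c else 0.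

End Defs.

(* Main.v *)
Require Import Defs.
From HB Require Import structures.
From mathcomp Require Import all_boot all_order all_algebra all_field.
From mathcomp Require Import all_classical all_reals all_analysis.
From mathcomp Require Import complex.
From mathcomp Require Import zify ring.
Import Order.TTheory GRing.Theory Num.Theory.
Import numFieldNormedType.Exports.
Local Open Scope classical_set_scope.
Local Open Scope ring_scope.

Section Comb.
Variable n : nat.

Lemma le_mdeg (a : mindex n) i : (a i <= mdeg a)%N.
Proof. by rewrite /mdeg (bigD1 i) //= leq_addr. Qed.

Lemma mem_mi_le N (a : mindex n) : (a \in mi_le n N) = (mdeg a <= N)%N.
Proof.
rewrite /mi_le mem_filter; apply/andb_idr => ha.
apply/mapP; exists [ffun i => (inord (a i) : 'I_N.+1)]; first by rewrite mem_enum.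
apply/ffunP => i; rewrite !ffunE inordK //; apply: leq_ltn_trans (le_mdeg a i) _.
by rewrite ltnS.
Qed.

Lemma uniq_mi_le N : uniq (mi_le n N).
Proof.
rewrite /mi_le filter_uniq // map_inj_uniq ?enum_uniq // => f g /ffunP H.
apply/ffunP => i; apply/val_inj; by have := H i; rewrite !ffunE.
Qed.

Lemma big_filter_all {V : nmodType} (s : seq (mindex n)) (P : pred (mindex n)) (F : mindex n -> V) :
  (forall a, a \in s -> P a) -> \sum_(a <- s | P a) F a = \sum_(a <- s) F a.
Proof. by move=> H; rewrite -big_filter; congr bigop; apply/all_filterP/allP. Qed.

Lemma big_seq1_uniq {V : nmodType} (s : seq (mindex n)) (a : mindex n) (F : mindex n -> V) :
  uniq s -> a \in s -> (forall b, b != a -> F b = 0) -> \sum_(b <- s) F b = F a.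
Proof.
move=> us ais H; rewrite (bigD1_seq a) //= big1 ?addr0 // => b; exact: H.
Qed.

Lemma regroup {V : nmodType} (F : mindex n -> V) N :
  \sum_(a <- mi_le n N) F a = \sum_(k < N.+1) \sum_(a <- mi_le n k | mdeg a == k) F a.
Proof.
elim: N => [|N IH].
  rewrite big_ord1 big_filter_all // => a; by rewrite mem_mi_le leqn0.
rewrite big_ord_recr /= -IH (bigID (fun a => mdeg a <= N)%N) /=; congr (_ + _).
  rewrite -big_filter; apply: perm_big; apply: uniq_perm.
  - by rewrite filter_uniq // uniq_mi_le.
  - exact: uniq_mi_le.
  by move=> a; rewrite mem_filter !mem_mi_le; apply/andb_idr => /leqW.
rewrite big_seq_cond [RHS]big_seq_cond; apply: eq_bigl => a.
rewrite mem_mi_le; case: (leqP (mdeg a) N) => h /=; first by rewrite andbF; symmetry; apply/andP => -[_ /eqP E]; rewrite E ltnn in h.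
rewrite andbT; case: (leqP (mdeg a) N.+1) => h2 //=; by rewrite eqn_leq h2 h.
Qed.

End Comb.
Definition Wt (B : nat) {n} (f : 'I_n -> nat) : nat := (\sum_(i < n) f i * B ^ i)%N.

Lemma Wt_rec B n (f : 'I_n.+1 -> nat) :
  Wt B f = (f ord0 + B * Wt B (fun i => f (lift ord0 i)))%N.
Proof.
rewrite /Wt big_ord_recl /= expn0 muln1; congr (_ + _)%N.
rewrite big_distrr /=; apply: eq_bigr => i _.
by rewrite /bump /= add1n expnS mulnCA.
Qed.

Lemma Wt_inj B n (f g : 'I_n -> nat) :
  (forall i, f i < B)%N -> (forall i, g i < B)%N -> Wt B f = Wt B g -> forall i, f i = g i.
Proof.
elim: n f g => [|n IH] f g hf hg E i; first by case: i.
move: E; rewrite !Wt_rec => E.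
have E0 : f ord0 = g ord0.
  have := congr1 (fun x => x %% B)%N E; rewrite /= !(addnC (_ ord0)) !(mulnC B) !modnMDl.
  by rewrite !modn_small.
have E1 : Wt B (fun i => f (lift ord0 i)) = Wt B (fun i => g (lift ord0 i)).
  have hB : (0 < B)%N by apply: leq_ltn_trans (hf ord0).
  have := congr1 (fun x => x %/ B)%N E; rewrite /= !(addnC (_ ord0)) !(mulnC B) !divnMDl //.
  by rewrite !divn_small // !addn0.
have IH' := IH _ _ (fun i => hf _) (fun i => hg _) E1.
by case: (unliftP ord0 i) => [j ->|->] //; apply: IH'.
Qed.

Lemma Wt_lt B n (f : 'I_n -> nat) : (forall i, f i < B)%N -> (Wt B f < B ^ n)%N.
Proof.
elim: n f => [|n IH] f hf; first by rewrite /Wt big_ord0.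
rewrite Wt_rec expnS.
have := IH _ (fun i => hf (lift ord0 i)); set x := Wt B _ => hx.
have h0 := hf ord0.
apply: (@leq_trans (B * x.+1)); first by rewrite mulnS -addSn leq_add2r.
by rewrite leq_mul2l hx orbT.
Qed.
Section Roots.
Variable C : numClosedFieldType.

Lemma prim_exists (K : nat) : (0 < K)%N -> exists z : C, K.-primitive_root z.
Proof.
pose p : {poly C} := 'X^K - 1; have [r Dp] := closed_field_poly_normal p.
move=> K_gt0; rewrite (monicP _) ?monicXnsubC // scale1r in Dp.
have rn1: all K.-unity_root r by apply/allP=> z; rewrite -root_prod_XsubC -Dp.
have sz_r: (K < (size r).+1)%N.
  by rewrite -(size_prod_XsubC r id) -Dp size_XnsubC.
have [|z _ ?] := hasP (cyclic.has_prim_root K_gt0 rn1 _ sz_r); last by exists z.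
by rewrite -separable_prod_XsubC -Dp separable_Xn_sub_1 // pnatr_eq0 -lt0n.
Qed.

Lemma prim_norm1 {K : nat} {z : C} : K.-primitive_root z -> `|z| = 1.
Proof.
move=> pz; have K0 := prim_order_gt0 pz.
apply/eqP; rewrite -(pexpr_eq1 K0) // -normrX (prim_expr_order pz) normr1 //.
Qed.

Lemma conj_norm1 (y : C) : `|y| = 1 -> y^* = y^-1.
Proof. by move=> h; rewrite invC_norm h expr1n invr1 mul1r. Qed.

Lemma geo_sum0 (y : C) K : y ^+ K = 1 -> y != 1 -> \sum_(j < K) y ^+ j = 0.
Proof.
move=> yK y1; have := subrX1 y K; rewrite yK subrr => /esym/eqP.
by rewrite mulf_eq0 subr_eq0 (negbTE y1) /= => /eqP.
Qed.

Lemma orth (K : nat) (z : C) u v : K.-primitive_root z -> (u < K)%N -> (v < K)%N ->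
  \sum_(j < K) (z ^+ j) ^+ u * ((z ^+ j) ^+ v)^* = (u == v)%:R * K%:R.
Proof.
move=> pz uK vK; have K0 := prim_order_gt0 pz; have zK := prim_expr_order pz.
have z1 := prim_norm1 pz.
have E : forall j : 'I_K, (z ^+ j) ^+ u * ((z ^+ j) ^+ v)^* = (z ^+ (u + K - v)) ^+ j.
  move=> j; rewrite conj_norm1; last by rewrite normrX normrX z1 !expr1n.
  have hv : (v <= K)%N by apply: ltnW.
  have -> : ((z ^+ j) ^+ v)^-1 = (z ^+ j) ^+ (K - v).
    apply: (@mulrI _ ((z ^+ j) ^+ v)); first by rewrite unitfE expf_neq0 // expf_neq0 // -normr_eq0 z1 oner_eq0.
    rewrite divrr; last by rewrite unitfE expf_neq0 // expf_neq0 // -normr_eq0 z1 oner_eq0.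
    by rewrite -exprD subnKC // -exprM mulnC exprM zK expr1n.
  rewrite -exprD -!exprM mulnC addnBA //.
rewrite (eq_bigr _ (fun j _ => E j)).
case: eqP => [<-|uv].
  rewrite addnC addnK zK mul1r; under eq_bigr do rewrite expr1n.
  by rewrite sumr_const card_ord.
rewrite mul0r; apply: geo_sum0; first by rewrite -exprM mulnC exprM zK expr1n.
rewrite -(prim_order_dvd pz).
case: (ltngtP u v) => h; last by [].
- rewrite gtnNdvd //; lia.
- have -> : (u + K - v = (u - v) + K)%N by lia.
  rewrite dvdn_addl // gtnNdvd //; lia.
Qed.

Lemma sum_root_pow (K : nat) (z : C) t : K.-primitive_root z ->
  \sum_(j < K) (z ^+ t) ^+ j = (K %| t)%N%:R * K%:R.
Proof.
move=> pz; have zK := prim_expr_order pz.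
case: (boolP (K %| t)%N) => h.
  move: h => /dvdnP [u ->]; rewrite mul1r (mulnC u K) exprM zK expr1n.
  under eq_bigr do rewrite expr1n.
  by rewrite sumr_const card_ord.
rewrite mul0r; apply: geo_sum0; first by rewrite -exprM mulnC exprM zK expr1n.
by rewrite -(prim_order_dvd pz).
Qed.
End Roots.
Section Cauchy.
Variable R : realType.
Local Notation C := (Cplx R).

Lemma geo_smallR {q e : R} : 0 <= q -> q < 1 -> 0 < e -> exists K : nat, q ^+ K < e.
Proof.
move=> q0 q1 e0.
have := @cvg_expr R q; rewrite ger0_norm // => /(_ q1) /cvgr_dist_lt /(_ _ e0) [N _ HN].
exists N; have := HN N (leqnn N); rewrite sub0r normrN ger0_norm //; exact: exprn_ge0.
Qed.

Lemma geo_small {q e : C} : 0 <= q -> q < 1 -> 0 < e -> exists K : nat, q ^+ K < e.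
Proof.
move=> q0 q1 e0.
have qr : q \is Num.real by apply: ger0_real.
have er : e \is Num.real by apply: gtr0_real.
rewrite -(RRe_real qr) -(RRe_real er) in q0 q1 e0 *.
rewrite -[0]/((0:R)%:C%C) -[1]/((1:R)%:C%C) ?lecR ?ltcR in q0 q1 e0.
have [K HK] := geo_smallR q0 q1 e0; exists K.
by rewrite -rmorphXn /= ltcR.
Qed.

Lemma cauchy_est (c : nat -> C) (m : nat) :
  (forall k, (k < m)%N -> c k = 0) ->
  (forall r : C, 0 <= r -> r < 1 -> exists M : C, forall N, \sum_(k < N.+1) `|c k| * r ^+ k <= M) ->
  (forall la : C, `|la| < 1 -> exists l : C,
      (fun N => \sum_(k < N.+1) c k * la ^+ k) @ \oo --> l /\ `|l| <= 1) ->
  `|c m| <= 1.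
Proof.
move=> H0 H1 H2.
have stepA : forall r : C, 0 <= r -> r < 1 -> `|c m| * r ^+ m <= 1.
  move=> r r0 r1.
  pose s := (1 + r) / 2.
  have two0 : (0 : C) < 2 by [].
  have s1 : s < 1 by rewrite ltr_pdivrMr // mul1r -[2]/(1 + 1) ltrD2l.
  have rs : r < s by rewrite ltr_pdivlMr // mulrDr mulr1 -[1 + r]addrC ltrD2l.
  have s0 : 0 < s by apply: le_lt_trans rs.
  have [M HM] := H1 s (ltW s0) s1.
  have M0 : 0 <= M.
    by apply: le_trans (HM 0%N); rewrite big_ord1 mulr_ge0 ?normr_ge0 ?exprn_ge0 // ltW.
  pose q := r / s.
  have q0 : 0 <= q by rewrite divr_ge0 // ltW.
  have q1 : q < 1 by rewrite ltr_pdivrMr // mul1r.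
  apply/ler_addgt0Pr => e e0.
  have M10 : 0 < M + 1 by apply: ltr_wpDl => //; exact: ltr01.
  have e20 : 0 < e / 2 / (M + 1) by rewrite !divr_gt0.
  have [K0 HK0] := geo_small q0 q1 e20.
  pose K := (K0 + m).+1.
  have K0lt : (0 < K)%N by [].
  have [th pth] := @prim_exists C K K0lt.
  have th1 := @prim_norm1 _ _ _ pth.
  pose la (j : nat) := r * th ^+ j.
  have hla : forall j : 'I_K, `|la j| < 1.
    by move=> j; rewrite normrM normrX th1 expr1n mulr1 ger0_norm.
  have [L HL] := choice (fun j : 'I_K => H2 _ (hla j)).
  pose w (j : nat) := (th ^+ j) ^+ (K - m).
  have w1 : forall j, `|w j| = 1 by move=> j; rewrite /w !normrX th1 !expr1n.
  pose S N (x : C) := \sum_(k < N.+1) c k * x ^+ k.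
  pose T N := K%:R^-1 * \sum_(j < K) w j * S N (la j).
  pose Tl := K%:R^-1 * \sum_(j < K) w j * L j.
  have Kn0 : (K%:R : C) != 0 by rewrite pnatr_eq0.
  have Kp : (0 : C) < K%:R by rewrite ltr0n.
  have Tl1 : `|Tl| <= 1.
    rewrite /Tl normrM normfV normr_nat ler_pdivrMl // mulr1.
    apply: le_trans (ler_norm_sum _ _ _) _.
    apply: le_trans (_ : \sum_(j < K) (1 : C) <= _); last by rewrite sumr_const card_ord.
    apply: ler_sum => j _; rewrite normrM w1 mul1r; exact: (HL j).2.
  have hnear : \forall N \near \oo, forall j : 'I_K, `|L j - S N (la j)| < e / 2.
    apply: filter_forall => j; apply: cvgr_dist_lt; first exact: (HL j).1.
    by rewrite divr_gt0.
  have [N0 _ HN0] := hnear.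
  pose N := maxn N0 m.
  have HN := HN0 N (leq_maxl _ _).
  have E1 : `|Tl - T N| <= e / 2.
    rewrite /Tl /T -mulrBr -sumrB normrM normfV normr_nat ler_pdivrMl //.
    apply: le_trans (ler_norm_sum _ _ _) _.
    apply: le_trans (_ : \sum_(j < K) (e / 2) <= _); last by rewrite sumr_const card_ord mulr_natl.
    apply: ler_sum => j _; rewrite -mulrBr normrM w1 mul1r; exact: ltW (HN j).
  have eqT : T N = \sum_(k < N.+1) c k * r ^+ k * (K %| K - m + k)%N%:R.
    rewrite /T /S.
    under eq_bigr => j _ do rewrite big_distrr /=.
    rewrite exchange_big /= big_distrr /=; apply: eq_bigr => k _.
    have -> : \sum_(j < K) w j * (c k * la j ^+ k) = c k * r ^+ k * \sum_(j < K) (th ^+ (K - m + k)) ^+ j.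
      rewrite big_distrr /=; apply: eq_bigr => j _.
      rewrite /w /la exprMn (exprAC th (K - m + k) j) exprD; ring.
    rewrite (@sum_root_pow C K th _ pth) mulrCA [K%:R^-1 * (_ * _)]mulrCA mulVf // mulr1 //.
  have hmN : (m < N.+1)%N by rewrite ltnS leq_maxr.
  have eqc : c m * r ^+ m = \sum_(k < N.+1) (if k == m :> nat then c k * r ^+ k else 0).
    by rewrite -big_mkcond /= (big_ord1_eq _ (fun i => c i * r ^+ i)) hmN.
  have rqs : r = q * s by rewrite /q divfK // gt_eqF.
  have dk : forall k : nat, `|c k * r ^+ k * (K %| K - m + k)%N%:R - (if k == m then c k * r ^+ k else 0)|
       <= q ^+ K0 * (`|c k| * s ^+ k).
    move=> k.
    have rhs0 : 0 <= q ^+ K0 * (`|c k| * s ^+ k) by rewrite !mulr_ge0 ?exprn_ge0 // ltW.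
    case: (ltngtP k m) => hk.
    - by rewrite H0 // !mul0r subrr normr0 mul0r mulr0.
    - rewrite subr0.
      case: (ltnP k (m + K)) => hk2.
        have -> : (K %| K - m + k)%N = false.
          have hmK : (m <= K)%N by rewrite /K ltnW // ltnS leq_addl.
          have -> : (K - m + k = (k - m) + K)%N by move: hmK hk; clear; lia.
          rewrite dvdn_addl // gtnNdvd //; first by rewrite subn_gt0.
          by rewrite ltn_subLR ?(ltnW hk) // addnC.
        by rewrite mulr0 normr0.
      rewrite !normrM normr_nat (ger0_norm (exprn_ge0 _ r0)).
      apply: le_trans (_ : `|c k| * r ^+ k <= _).
        rewrite -[X in _ <= X]mulr1; apply: ler_wpM2l; first by rewrite mulr_ge0 ?normr_ge0 ?exprn_ge0.
        by case: (K %| _)%N; rewrite ?ler01 ?lexx.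
      rewrite rqs exprMn mulrCA; apply: ler_wpM2r; first by rewrite mulr_ge0 ?normr_ge0 ?exprn_ge0 // ltW.
      apply: ler_wiXn2l => //; first exact: ltW.
      rewrite /K in hk2; clear -hk2; lia.
    - rewrite hk subnK; last by rewrite /K ltnW // ltnS leq_addl.
      by rewrite dvdnn mulr1 subrr normr0 -hk.
  have E2 : `|T N - c m * r ^+ m| <= e / 2.
    rewrite eqT eqc -sumrB; apply: le_trans (ler_norm_sum _ _ _) _.
    apply: le_trans (_ : \sum_(k < N.+1) q ^+ K0 * (`|c k| * s ^+ k) <= _).
      by apply: ler_sum => k _; exact: dk.
    rewrite -big_distrr /=; apply: le_trans (_ : q ^+ K0 * (M + 1) <= _).
      apply: ler_wpM2l; first by rewrite exprn_ge0.
      apply: le_trans (HM N) _; by rewrite lerDl ler01.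
    by rewrite -ler_pdivlMr // ltW.
  have -> : `|c m| * r ^+ m = `|c m * r ^+ m| by rewrite normrM normrX (ger0_norm r0).
  have -> : c m * r ^+ m = Tl - (Tl - T N) - (T N - c m * r ^+ m) by ring.
  apply: le_trans (ler_normB _ _) _; apply: le_trans (lerD (ler_normB _ _) (lexx _)) _.
  rewrite [e]splitr addrA; apply: lerD; last exact: E2.
  by apply: lerD.
case: (posnP m) => hm.
  by have := stepA 0 (lexx 0) ltr01; rewrite hm expr0 mulr1.
rewrite (real_leNgt (normr_real _) (real1 _)); apply/negP => hx.
move: stepA; set x := `|c m| => stepA.
have x0 : 0 < 1 + x by apply: addr_gt0; [exact: ltr01 | exact: lt_trans ltr01 hx].
pose t := 2 / (1 + x).
have t0 : 0 <= t by rewrite divr_ge0 // ltW.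
have t1 : t < 1 by rewrite ltr_pdivrMr // mul1r -[2]/(1 + 1) ltrD2l.
pose r := m.-root t.
have r0 : 0 <= r by rewrite rootC_ge0.
have rm : r ^+ m = t by rewrite rootCK.
have r1 : r < 1.
  rewrite (real_ltNge (ger0_real r0) (real1 _)); apply/negP => h.
  by have := exprn_ege1 m h; rewrite rm => /(lt_le_trans t1); rewrite ltxx.
have := stepA r r0 r1; rewrite rm /t mulrA ler_pdivrMr // mul1r.
rewrite mulr_natr mulr2n lerD2r => hx1.
by have := lt_le_trans hx hx1; rewrite ltxx.
Qed.
End Cauchy.
Lemma big_seq1_in {T : eqType} {V : nmodType} (s : seq T) (a : T) (F : T -> V) :
  uniq s -> a \in s -> (forall b, b \in s -> b != a -> F b = 0) -> \sum_(b <- s) F b = F a.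
Proof.
move=> us ais H; rewrite (bigD1_seq a) //= big_seq_cond big1 ?addr0 // => b /andP [bs ba].
exact: H.
Qed.

Lemma subr_ge0_of {T : numDomainType} {x y : T} : x <= y -> 0 <= y - x.
Proof. by rewrite subr_ge0. Qed.

Section Alg.
Variable R : realType.
Local Notation C := (Cplx R).
Variable n : nat.

Definition Sm m : seq (mindex n) := [seq a <- mi_le n m | mdeg a == m].
Lemma mem_Sm m a : (a \in Sm m) = (mdeg a == m).
Proof. by rewrite mem_filter mem_mi_le; apply/andb_idr => /eqP ->. Qed.
Lemma uniq_Sm m : uniq (Sm m). Proof. by rewrite filter_uniq // uniq_mi_le. Qed.

Lemma Sm_lt {m} {a : mindex n} : a \in Sm m -> forall i, (a i < m.+1)%N.
Proof. rewrite mem_Sm => /eqP <- i; rewrite ltnS; exact: le_mdeg. Qed.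

Lemma W_inj_Sm {m a b} : a \in Sm m -> b \in Sm m -> Wt m.+1 a = Wt m.+1 b -> a = b.
Proof. move=> ha hb E; apply/ffunP => i; exact: (@Wt_inj _ _ _ _ (Sm_lt ha) (Sm_lt hb) E i). Qed.

Lemma zpow_W m (x : C) (a : mindex n) : zpow (fun i => x ^+ (m.+1 ^ i)) a = x ^+ Wt m.+1 a.
Proof. rewrite /zpow /Wt -prodrXr; apply: eq_bigr => i _; by rewrite -exprM mulnC. Qed.


Lemma main_alg m (p : coeffs R n) :
  homog m p -> \sum_(a <- Sm m) `|p a| ^+ 2 = 1 ->
  (forall x : C, `|x| = 1 -> `|\sum_(a <- Sm m) p a * x ^+ Wt m.+1 a| <= 1) ->
  unimod_monomial p.
Proof.
move=> hp hn hbd.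
set B := m.+1; set S := Sm m.
pose W (a : mindex n) := Wt B a.
pose D := (B ^ n)%N.
have WD : forall a, a \in S -> (W a < D)%N by move=> a ha; exact: Wt_lt (Sm_lt ha).
have Winj : forall a b, a \in S -> b \in S -> W a = W b -> a = b.
  by move=> a b ha hb1; exact: W_inj_Sm.
have D0 : (0 < D)%N by rewrite expn_gt0.
pose K := (D + D)%N.
have K0 : (0 < K)%N by rewrite addn_gt0 D0.
have [th pth] := @prim_exists C K K0.
have th1 := @prim_norm1 _ _ _ pth.
have xj1 : forall j : nat, `|th ^+ j| = 1 by move=> j; rewrite normrX th1 expr1n.
pose P (x : C) := \sum_(a <- S) p a * x ^+ W a.
have Qf : forall s, (s < D)%N -> \sum_(j < K) P (th ^+ j) * (P (th ^+ j) * (th ^+ j) ^+ s)^* =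
     K%:R * \sum_(a <- S) \sum_(b <- S) (W a == W b + s)%N%:R * (p a * (p b)^*).
  move=> s sD.
  have E : forall j : 'I_K, P (th ^+ j) * (P (th ^+ j) * (th ^+ j) ^+ s)^* =
      \sum_(a <- S) \sum_(b <- S) p a * (p b)^* * ((th ^+ j) ^+ (W a) * ((th ^+ j) ^+ (W b + s))^*).
    move=> j; rewrite /P rmorphM rmorph_sum /= big_distrl /= big_distrl /=; apply: eq_bigr => a _.
    rewrite big_distrr /=; apply: eq_bigr => b _.
    rewrite !rmorphM /= exprD rmorphM /=; ring.
  rewrite (eq_bigr _ (fun j _ => E j)) exchange_big big_distrr /=; apply: eq_big_seq => a ha.
  rewrite exchange_big big_distrr /=; apply: eq_big_seq => b hb'.
  rewrite -big_distrr /= orth //.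
  - ring.
  - by apply: (ltn_trans (WD a ha)); rewrite /K -addn1 leq_add2l.
  - by rewrite /K -addSn leq_add // ?(WD b hb') // ltnW.
have hsum : \sum_(j < K) `|P (th ^+ j)| ^+ 2 = K%:R.
  have := Qf 0%N D0.
  rewrite (eq_bigr (fun j : 'I_K => `|P (th ^+ j)| ^+ 2)); last first.
    by move=> j _; rewrite expr0 mulr1 normCK.
  move=> ->; rewrite -[RHS]mulr1; congr (_ * _).
  transitivity (\sum_(a <- S) `|p a| ^+ 2); last exact: hn.
  apply: eq_big_seq => a ha.
  rewrite (@big_seq1_in _ _ _ a) ?uniq_Sm // ?addn0 ?eqxx ?mul1r ?normCK //.
  move=> b hb1 ba; rewrite addn0; case: eqP => [E|_]; last by rewrite mul0r.
  by move: ba; rewrite (Winj _ _ hb1 ha (esym E)) eqxx.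
have hle : forall j : 'I_K, `|P (th ^+ j)| ^+ 2 <= 1.
  by move=> j; rewrite expr_le1 // hbd // xj1.
have Pj : forall j : 'I_K, P (th ^+ j) * (P (th ^+ j))^* = 1.
  move=> j.
  have h0 : \sum_(j < K) (1 - `|P (th ^+ j)| ^+ 2) = 0.
    by rewrite sumrB hsum sumr_const card_ord subrr.
  have := @psumr_eq0P _ _ _ (fun j : 'I_K => 1 - `|P (th ^+ j)| ^+ 2)
     (fun j _ => subr_ge0_of (hle j)) h0 j isT.
  by move/eqP; rewrite subr_eq0 normCK => /eqP <-.
have hasS : has (fun a => p a != 0) S.
  apply/negPn/negP => /hasPn H.
  have : \sum_(a <- S) `|p a| ^+ 2 = 0.
    rewrite big_seq big1 // => a ha; have := H a ha; rewrite negbK => /eqP ->.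
    by rewrite normr0 expr2 mul0r.
  by rewrite hn => /eqP; rewrite oner_eq0.
pose Pk k := has (fun a => (p a != 0) && (W a == k)) S.
have PkW : forall a, a \in S -> p a != 0 -> Pk (W a).
  by move=> a ha pa; apply/hasP; exists a => //; rewrite pa eqxx.
have exP : exists k, Pk k.
  by move/hasP: hasS => [a ha pa]; exists (W a); exact: PkW.
have ubP : forall k, Pk k -> (k <= D)%N.
  by move=> k /hasP [a ha /andP [_ /eqP <-]]; exact: ltnW (WD a ha).
case: (ex_maxnP exP ubP) => hi /hasP [a1 a1S /andP [pa1 /eqP Wa1]] himax.
case: (ex_minnP exP) => lo /hasP [b0 b0S /andP [pb0 /eqP Wb0]] lomin.
have lohi : (lo <= hi)%N by apply: lomin; rewrite -Wa1; exact: PkW.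
have hiD : (hi < D)%N by rewrite -Wa1; exact: WD.
pose s := (hi - lo)%N.
have sD : (s < D)%N by apply: leq_ltn_trans (leq_subr _ _) hiD.
have RHS : \sum_(a <- S) \sum_(b <- S) (W a == W b + s)%N%:R * (p a * (p b)^*) = p a1 * (p b0)^*.
  rewrite (@big_seq1_in _ _ _ a1) ?uniq_Sm //.
    rewrite (@big_seq1_in _ _ _ b0) ?uniq_Sm //.
      by rewrite Wa1 Wb0 /s subnKC // eqxx mul1r.
    move=> b hbS hb0; case: (eqVneq (p b) 0) => [->|pb]; first by rewrite conjC0 !mulr0.
    case: eqP => [E|]; last by rewrite mul0r.
    exfalso; move/eqP: hb0; apply; apply: Winj => //.
    have := lomin _ (PkW _ hbS pb); rewrite Wb0; move: E; rewrite Wa1 /s.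
    by move: lohi; clear; lia.
  move=> a haS ha1; rewrite big1_seq // => b /andP [_ hbS].
  case: (eqVneq (p a) 0) => [->|pa]; first by rewrite mul0r mulr0.
  case: (eqVneq (p b) 0) => [->|pb]; first by rewrite conjC0 !mulr0.
  case: eqP => [E|]; last by rewrite mul0r.
  exfalso; move/eqP: ha1; apply; apply: Winj => //.
  have := lomin _ (PkW _ hbS pb); have := himax _ (PkW _ haS pa); rewrite Wa1; move: E; rewrite /s.
  by move: lohi; clear; lia.
have s0 : s = 0%N.
  case: (eqVneq s 0%N) => // sn0; exfalso.
  have := Qf s sD.
  rewrite (eq_bigr (fun j : 'I_K => (th ^+ j) ^+ 0 * ((th ^+ j) ^+ s)^*)); last first.
    by move=> j _; rewrite rmorphM /= mulrA Pj expr0.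
  rewrite orth //; last by apply: (ltn_trans sD); rewrite /K -addn1 leq_add2l.
  rewrite RHS eq_sym (negbTE sn0) mul0r => /esym/eqP.
  by rewrite !mulf_eq0 pnatr_eq0 (gtn_eqF K0) conjC_eq0 (negbTE pa1) (negbTE pb0).
have onlyA1 : forall a, a \in S -> a != a1 -> p a = 0.
  move=> a ha na; apply/eqP; apply/negP => /negP pa; move/eqP: na; apply; apply: Winj => //.
  have := lomin _ (PkW _ ha pa); have := himax _ (PkW _ ha pa); rewrite Wa1; move: s0; rewrite /s.
  by move: lohi; clear; lia.
exists (p a1), a1; split.
  move: hn; rewrite (@big_seq1_in _ _ _ a1) ?uniq_Sm //; last first.
    by move=> b hbS hb; rewrite onlyA1 // normr0 expr2 mul0r.
  by move/eqP; rewrite (@pexpr_eq1 _ _ 2) // => /eqP.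
move=> a; case: eqP => [->|/eqP na] //.
case: (eqVneq (mdeg a) m) => hdeg; last by apply: hp; apply/eqP.
by apply: onlyA1 => //; rewrite mem_Sm hdeg.
Qed.

End Alg.

Section Final.
Variable R : realType.
Local Notation C := (Cplx R).
Variable n : nat.

Definition delta0 : coeffs R n := fun a => (a == [ffun _ => 0%N])%:R.

Lemma mdeg0 : mdeg ([ffun _ => 0%N] : mindex n) = 0%N.
Proof. by rewrite /mdeg big1 // => i _; rewrite ffunE. Qed.

Lemma inQ_delta0 m : inQ m delta0.
Proof.
move=> a ha; rewrite /delta0; case: eqP => // E; by move: ha; rewrite E mdeg0.
Qed.

Lemma mulc_delta0 (f : coeffs R n) a : Defs.mulc f delta0 a = f a.
Proof.
rewrite /Defs.mulc big_mkcond /= (@big_seq1_in _ _ _ a) ?uniq_mi_le ?mem_mi_le //.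
  have -> : [forall i, a i <= a i]%N by apply/forallP => i.
  rewrite /delta0; have -> : [ffun i => (a i - a i)%N] = [ffun _ => 0%N] :> mindex n.
    by apply/ffunP => i; rewrite !ffunE subnn.
  by rewrite eqxx mulr1.
move=> b _ ba; case: ifP => // /forallP hb.
rewrite /delta0; case: eqP => [E|]; last by rewrite mulr0.
exfalso; move/eqP: ba; apply; apply/ffunP => i.
have := congr1 (fun g : mindex n => g i) E; rewrite /= !ffunE => /eqP.
by rewrite subn_eq0 => h; apply/eqP; rewrite eqn_leq hb h.
Qed.

Lemma zpow_scale (la : C) (z : 'I_n -> C) a :
  zpow (fun i => la * z i) a = la ^+ mdeg a * zpow z a.
Proof.
rewrite /zpow /mdeg -prodrXr -big_split /=; apply: eq_bigr => i _; exact: exprMn.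
Qed.

Lemma psum_regroup (phi : coeffs R n) (z : 'I_n -> C) (la : C) N :
  psum phi (fun i => la * z i) N =
  \sum_(k < N.+1) (\sum_(a <- mi_le n k | mdeg a == k) phi a * zpow z a) * la ^+ k.
Proof.
rewrite /psum regroup; apply: eq_bigr => k _; rewrite big_distrl /=.
apply: eq_bigr => a /eqP hk; rewrite zpow_scale hk; ring.
Qed.

End Final.

Theorem theorem3p2 (R : realType) (n m : nat) (p : coeffs R n) :
  (0 < n)%N ->
  homog m p ->
  h2norm_homog m p = 1 ->
  (exists phi : coeffs R n, in_schur_ball phi /\
     forall q : coeffs R n, inQ m q -> PQmul m phi q = PQmul m p q)
  <-> unimod_monomial p.
Proof.
move=> n0 hp hn; split.
  case=> phi [hphi hq].
  have phip : forall a, (mdeg a <= m)%N -> phi a = p a.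
    move=> a ha; have := congr1 (fun f => f a) (hq _ (@inQ_delta0 R n m)).
    by rewrite /PQmul ha !mulc_delta0.
  have hn' : \sum_(a <- Sm n m) `|p a| ^+ 2 = 1.
    move: hn; rewrite /h2norm_homog /Sm big_filter => h.
    by rewrite -(sqrtCK (\sum_(a <- mi_le n m | mdeg a == m) `|p a| ^+ 2)) h expr1n.
  apply: (@main_alg R n m p hp hn').
  move=> x x1.
  pose ze := fun i : 'I_n => x ^+ (m.+1 ^ i).
  have ze1 : forall i, `|ze i| = 1 by move=> i; rewrite normrX x1 expr1n.
  pose c k := \sum_(a <- mi_le n k | mdeg a == k) phi a * zpow ze a.
  have -> : \sum_(a <- Sm n m) p a * x ^+ Wt m.+1 a = c m.
    rewrite /c /Sm big_filter; apply: eq_bigr => a /eqP ha.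
    by rewrite phip ?ha // zpow_W.
  apply: (@cauchy_est R c m).
  - move=> k hk; rewrite /c big1 // => a /eqP ha.
    rewrite phip ?hp ?mul0r //; rewrite ha; last exact: ltnW.
    by move=> E; rewrite E ltnn in hk.
  - move=> r r0 r1.
    have hz : forall i, `|r * ze i| < 1 by move=> i; rewrite normrM ze1 mulr1 ger0_norm.
    have [[M HM] _] := hphi _ hz.
    exists M => N; apply: le_trans (HM N).
    rewrite regroup; apply: ler_sum => k _.
    rewrite /c -(ger0_norm (exprn_ge0 k r0)) -normrM big_distrl /=.
    apply: le_trans (ler_norm_sum _ _ _) _.
    apply: ler_sum => a /eqP ha; rewrite zpow_scale ha.
    by rewrite [r ^+ k * _]mulrC mulrA.
  - move=> la hla.
    have hz : forall i, `|la * ze i| < 1 by move=> i; rewrite normrM ze1 mulr1.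
    have [_ [l [hl l1]]] := hphi _ hz.
    exists l; split => //.
    have -> : (fun N => \sum_(k < N.+1) c k * la ^+ k) = psum phi (fun i => la * ze i).
      by apply: funext => N; rewrite psum_regroup.
    exact: hl.
case=> c [a0 [c1 hpa]].
exists p; split => // z hz.
have hza : `|zpow z a0| <= 1.
  rewrite /zpow normr_prod; apply: le_trans (_ : \prod_(i < n) (1:Cplx R) <= 1).
    apply: ler_prod => i _; rewrite normr_ge0 normrX /= exprn_ile1 // ltW //.
  by rewrite big1.
have term : forall a, p a * zpow z a = if a == a0 then c * zpow z a0 else 0.
  by move=> a; rewrite hpa; case: eqP => [->|]; rewrite ?mul0r.
split.
  exists 1 => N; rewrite (eq_bigr (fun a => if a == a0 then `|c * zpow z a0| else 0)); last first.
    by move=> a _; rewrite term; case: eqP => _; rewrite ?normr0.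
  case: (boolP (a0 \in mi_le n N)) => ha0.
    rewrite (@big_seq1_in _ _ _ a0) ?uniq_mi_le // ?eqxx ?normrM ?c1 ?mul1r //.
    by move=> b _ /negbTE ->.
  rewrite big1_seq ?ler01 // => a /andP [_ ha]; case: eqP => // E.
  by move: ha0; rewrite -E ha.
exists (c * zpow z a0); split; last by rewrite normrM c1 mul1r.
apply: cvg_near_cst; exists (mdeg a0) => // N /= hN.
rewrite /psum (eq_bigr _ (fun a _ => term a)) (@big_seq1_in _ _ _ a0) ?uniq_mi_le ?mem_mi_le ?eqxx //.
by move=> b _ /negbTE ->.
Qed.
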